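(* Let $\mathcal{M}=(E,\mathcal{I})$ be a matroid with rank function $r_{\mathcal{M}}$ and $E=\{e_1,\dots,e_n\}$, let $E_0$ be its set of loops, and let $E_1,\dots,E_k$ and $r_1,\dots,r_k$ be the ground sets and ranks of the principal minors of $\mathcal{M}\setminus E_0$. Let $\mathcal{P}$ be the partition matroid on $E$, with rank function $r_{\mathcal{P}}$, whose independent sets are the sets $\bigcup_{i=1}^k I_i$ with $I_i\subseteq E_i$ and $|I_i|\leq r_i$. Let $\sigma$ be a uniformly random permutation of $[n]$ and for $1\leq j\leq n$ let $A^\sigma_j=\{e_{\sigma(1)},\dots,e_{\sigma(j)}\}$. Then for every $1\leq j\leq n$, $$\mathbb{E}_\sigma[r_{\mathcal{P}}(A^\sigma_j)]\geq(1-1/e)\,\mathbb{E}_\sigma[r_{\mathcal{M}}(A^\sigma_j)].$$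
   Context: Principal sequence: for a loopless matroid $\mathcal{N}$ on ground set $S$ with rank function $r$, there are unique sets $\emptyset=F_0\subsetneq F_1\subsetneq\dots\subsetneq F_k=S$ and values $\infty>\lambda_1>\dots>\lambda_k\geq 1$ such that $\lambda_1,\dots,\lambda_k$ are exactly the values $\lambda$ for which $f_\lambda(X)=\lambda r(X)-|X|$ ($X\subseteq S$) has more than one minimizer, and the unique minimal and maximal minimizers of $f_{\lambda_i}$ are $F_{i-1}$ and $F_i$. The principal minors are $\mathcal{M}_i=(\mathcal{N}/F_{i-1})|_{E_i}$ with ground set $E_i=F_i\setminus F_{i-1}$ and rank $r_i$. *)

(* Defs.v *)
From mathcomp Require Import all_boot all_order all_algebra.
From mathcomp Require Import fingroup perm reals sequences exp.
Set Implicit Arguments. Unset Strict Implicit. Unset Printing Implicit Defensive.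
Import Order.TTheory GRing.Theory Num.Theory.
Local Open Scope ring_scope.

Section Matroids.
Variable T : finType.

Definition is_matroid (indep : {set T} -> bool) : Prop :=
  [/\ indep set0,
      (forall I J : {set T}, J \subset I -> indep I -> indep J) &
      (forall I J : {set T}, indep I -> indep J -> (#|I| < #|J|)%N ->
         exists2 x, x \in J :\: I & indep (x |: I))].

Definition mrank (indep : {set T} -> bool) (X : {set T}) : nat :=
  \max_(I : {set T} | indep I && (I \subset X)) #|I|.

Definition loops (indep : {set T} -> bool) : {set T} :=
  [set x | ~~ indep [set x]].

Definition flam (R : realType) (r : {set T} -> nat) (lam : R) (X : {set T}) : R :=
  lam * (r X)%:R - (#|X|)%:R.

Definition minimizer (R : realType) (S : {set T}) (r : {set T} -> nat)
    (lam : R) (X : {set T}) : Prop :=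
  X \subset S /\ forall Y : {set T}, Y \subset S -> flam r lam X <= flam r lam Y.

(* (F_0..F_k, lambda_1..lambda_k) is the principal sequence of the loopless
   matroid on ground set S with rank function r (indices 1..k for lambda). *)
Definition principal_sequence (R : realType) (S : {set T}) (r : {set T} -> nat)
    (k : nat) (F : nat -> {set T}) (lam : nat -> R) : Prop :=
  [/\ F 0%N = set0, F k = S,
      (forall i, (i < k)%N -> F i \proper F i.+1) &
      (forall i, (1 <= i)%N -> (i < k)%N -> lam i.+1 < lam i)] /\
  ((0 < k)%N -> 1 <= lam k) /\
  (forall l : R,
     (exists X Y, [/\ minimizer S r l X, minimizer S r l Y & X != Y]) <->
     (exists2 i, (1 <= i <= k)%N & l = lam i)) /\
  (forall i, (1 <= i <= k)%N ->
     [/\ minimizer S r (lam i) (F i.-1), minimizer S r (lam i) (F i) &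
         forall X, minimizer S r (lam i) X -> (F i.-1 \subset X) && (X \subset F i)]).

(* Rank of the principal minor M_i = (N / F_{i-1}) | E_i evaluated on X. *)
Definition minor_rank (r : {set T} -> nat) (F : nat -> {set T}) (i : nat)
    (X : {set T}) : nat :=
  (r (X :|: F i.-1) - r (F i.-1))%N.

Definition minor_ground (F : nat -> {set T}) (i : nat) : {set T} := F i :\: F i.-1.

Definition partition_indep (k : nat) (E : nat -> {set T}) (rk : nat -> nat)
    (I : {set T}) : bool :=
  [exists Is : {ffun 'I_k -> {set T}},
     (I == \bigcup_(i : 'I_k) Is i) &&
     [forall i : 'I_k, (Is i \subset E i.+1) && (#|Is i| <= rk i.+1)%N]].

End Matroids.

(* A^sigma_j = {e_sigma(1), ..., e_sigma(j)} (0-indexed ordinals). *)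
Definition prefix_set (n : nat) (T : finType) (e : 'I_n -> T) (s : 'S_n) (j : nat)
  : {set T} := [set e (s i) | i : 'I_n & (i < j)%N].

Definition Eperm (R : realType) (n : nat) (f : 'S_n -> R) : R :=
  (\sum_(s : 'S_n) f s) / (n`!)%:R.

(* Main.v *)
Require Import Defs.
From mathcomp Require Import all_boot all_order all_algebra.
From mathcomp Require Import fingroup perm reals sequences exp.
From mathcomp Require Import convex interval_inference ring lra zify.
Import Order.TTheory GRing.Theory Num.Theory.
Local Open Scope ring_scope.
Set Implicit Arguments. Unset Strict Implicit. Unset Printing Implicit Defensive.
Section PermPart.
Variables (T : finType) (n : nat) (e : 'I_n -> T).
Hypothesis ebij : bijective e.

Definition cnt (s : 'S_n) (t : nat) (X : {set T}) : nat :=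
  \sum_(i < n | (i < t)%N) (e (s i) \in X).

Lemma e_inj : injective e. Proof. exact: bij_inj ebij. Qed.

Lemma card_prefixI s t X : #|prefix_set e s t :&: X| = cnt s t X.
Proof.
have -> : prefix_set e s t :&: X =
   (fun i => e (s i)) @: [set i : 'I_n | (i < t)%N && (e (s i) \in X)].
  apply/setP=> x; rewrite inE; apply/andP/imsetP.
  - case=> /imsetP[i]; rewrite inE => hi -> hx; by exists i => //; rewrite inE hi hx.
  - case=> i; rewrite inE => /andP[hi hx] ->; split; last exact: hx.
    by apply/imsetP; exists i; rewrite ?inE.
rewrite (@card_imset _ _ (fun i => e (s i))); last by move=> i j /e_inj /perm_inj.
rewrite -sum1_card /cnt.
rewrite (eq_bigl (fun i : 'I_n => (i < t)%N && (e (s i) \in X))); last by move=> i; rewrite inE.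
rewrite big_mkcondr /=.
by apply: eq_bigr => i _; case: (e (s i) \in X).
Qed.

Lemma cnt_total (s : 'S_n) (X : {set T}) : \sum_(u < n) (e (s u) \in X : nat) = #|X|.
Proof.
rewrite -sum1_card.
have hb : bijective (fun u => e (s u)).
  by apply: (bij_comp ebij); apply: injF_bij; exact: perm_inj.
rewrite [RHS](reindex (fun u => e (s u))) /=; last exact: onW_bij.
rewrite [RHS]big_mkcond; apply: eq_bigr => u _; by case: (e (s u) \in X).
Qed.

Lemma cnt_split s t X :
  (cnt s t X + \sum_(u < n | (t <= u)%N) (e (s u) \in X : nat) = #|X|)%N.
Proof.
rewrite -(cnt_total s X) [RHS](bigID (fun u : 'I_n => (u < t)%N)) /=.
by congr (_ + _)%N; apply: eq_bigl => u; rewrite leqNgt.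
Qed.

Lemma swap_sum (V : nmodType) (Phi : 'S_n -> V) (X : {set T}) (a b : 'I_n) :
  (forall s, Phi (tperm a b * s)%g = Phi s) ->
  \sum_s (Phi s *+ (e (s a) \in X)) = \sum_s (Phi s *+ (e (s b) \in X)).
Proof.
move=> H; rewrite (reindex_inj (mulgI (tperm a b))) /=.
by apply: eq_bigr => s _; rewrite H permM tpermL.
Qed.

Lemma cnt_inv s t X (tt u : 'I_n) : val tt = t -> (t <= u)%N ->
  cnt (tperm tt u * s)%g t X = cnt s t X.
Proof.
move=> ht hu; apply: eq_bigr => i hi; rewrite permM tpermD //.
- by rewrite -(inj_eq val_inj) /= ht neq_ltn hi orbT.
- by rewrite -(inj_eq val_inj) /= neq_ltn (leq_trans hi hu) orbT.
Qed.

Lemma cnt0 s X : cnt s 0 X = 0%N.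
Proof. by rewrite /cnt big_pred0. Qed.

Lemma cnt_succ s t X (ht : (t < n)%N) :
  cnt s t.+1 X = (cnt s t X + (e (s (Ordinal ht)) \in X))%N.
Proof.
rewrite /cnt (bigD1 (Ordinal ht)) //= addnC; congr (_ + _)%N.
by apply: eq_bigl => i; rewrite ltnS -(inj_eq val_inj) /= andbC -ltn_neqAle.
Qed.

Lemma swap_gen (V : nmodType) (H : 'S_n -> 'I_n -> V) (a b : 'I_n) :
  (forall s y, H (tperm a b * s)%g y = H s y) ->
  \sum_s H s (s a) = \sum_s H s (s b).
Proof.
move=> HH; rewrite (reindex_inj (mulgI (tperm a b))) /=.
by apply: eq_bigr => s _; rewrite HH permM tpermL.
Qed.

Lemma Dn_bound t (ht : (t < n)%N) X r :
  (\sum_s ((cnt s t X < r) * (#|X| - cnt s t X)) <=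
   n * \sum_s ((cnt s t X < r) * (e (s (Ordinal ht)) \in X)))%N.
Proof.
set D := (\sum_s _ in X in (_ <= n * X)%N).
have HD : forall u : 'I_n, (t <= u)%N ->
    D = \sum_s ((cnt s t X < r) * (e (s u) \in X))%N.
  move=> u hu; rewrite /D.
  apply: (@swap_gen _ (fun s y => (cnt s t X < r) * (e y \in X))%N (Ordinal ht) u) => s y.
  by rewrite (@cnt_inv s t X (Ordinal ht) u (erefl _) hu).
have -> : \sum_s ((cnt s t X < r) * (#|X| - cnt s t X))%N =
          \sum_(u < n | (t <= u)%N) \sum_s ((cnt s t X < r) * (e (s u) \in X))%N.
  rewrite exchange_big /=; apply: eq_bigr => s _.
  rewrite -big_distrr /=; congr (_ * _)%N.
  by rewrite -(cnt_split s t X) addKn.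
rewrite (eq_bigr (fun _ => D)); last by move=> u hu; rewrite (HD u hu).
rewrite big_mkcond /=.
apply: (@leq_trans (\sum_(u < n) D)).
  by apply: leq_sum => u _; case: ifP.
by rewrite sum_nat_const card_ord.
Qed.

End PermPart.

Section KeyExp.
Variable R : realType.
Let c : R := 1 - (expR (1 : R))^-1.

Lemma key1 (x : R) : 0 <= x -> x <= 1 -> c * x <= 1 - expR (- x).
Proof.
move=> x0 x1; rewrite /c -expRN.
have := convex_expR (Itv01 x0 x1) (-1) 0.
have E : forall a b : R^o, conv (Itv01 x0 x1) a b = x * a + (1-x) * b.
  by move=> a b; rewrite /conv /=; reflexivity.
rewrite !E expR0 => h.
have : expR (-x) <= x * expR (-1) + (1 - x) by move: h; rewrite mulr0 mulrN1 addr0 mulr1.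
lra.
Qed.

Lemma key2 (x : R) : 1 <= x -> c <= 1 - expR (- x).
Proof.
move=> x1; rewrite /c -expRN.
have : expR (- x) <= expR (-1) by rewrite ler_expR lerN2.
lra.
Qed.
End KeyExp.

Section HypPart.
Variables (R : realType) (T : finType) (n : nat) (e : 'I_n -> T).
Hypothesis ebij : bijective e.
Let N : R := (n`!)%:R.

Definition Gs (X : {set T}) (r t : nat) : R :=
  \sum_(s : 'S_n) ((minn (cnt e s t X) r)%:R).

Lemma N_gt0 : 0 < N.
Proof. by rewrite /N ltr0n fact_gt0. Qed.

Lemma step t (ht : (t < n)%N) (X : {set T}) r : (0 < r)%N -> (r <= #|X|)%N ->
  r%:R * N - Gs X r t.+1 <=
  (1 - #|X|%:R / (r%:R * n%:R)) * (r%:R * N - Gs X r t).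
Proof.
move=> r0 rX.
set c := fun s => cnt e s t X.
set D : R := \sum_s (((c s < r) * (e (s (Ordinal ht)) \in X))%N%:R).
have GS : Gs X r t.+1 = Gs X r t + D.
  rewrite /Gs /D -big_split /=; apply: eq_bigr => s _.
  rewrite cnt_succ -natrD; congr (_%:R); rewrite /c.
  case: (e (s _) \in X); case: (ltnP (cnt e s t X) r) => h /=; lia.
have ND : \sum_s (((c s < r) * (#|X| - c s))%N%:R) <= n%:R * D.
  rewrite /D -!natr_sum -natrM ler_nat; exact: Dn_bound.
have PW : forall s, #|X|%:R * (r%:R - (minn (c s) r)%:R) <=
     r%:R * (((c s < r) * (#|X| - c s))%N%:R) :> R.
  move=> s; rewrite -natrB ?geq_minr // -!natrM ler_nat.
  case: ltnP => h /=; nia.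
have SUM : \sum_s (r%:R - (minn (c s) r)%:R) = r%:R * N - Gs X r t :> R.
  by rewrite sumrB sumr_const card_Sn /Gs mulr_natr.
have K : #|X|%:R * (r%:R * N - Gs X r t) <= (r%:R * n%:R) * D.
  rewrite -SUM mulr_sumr -mulrA.
  apply: le_trans (ler_wpM2l _ ND); last by rewrite ler0n.
  rewrite mulr_sumr; apply: ler_sum => s _; exact: PW.
have n0 : (0 < n)%N by exact: (leq_ltn_trans (leq0n t) ht).
have rn0 : 0 < r%:R * n%:R :> R by rewrite mulr_gt0 // ltr0n.
have key : #|X|%:R / (r%:R * n%:R) * (r%:R * N - Gs X r t) <= D.
  by rewrite mulrAC ler_pdivrMr // [D * _]mulrC.
rewrite GS mulrBl mul1r; lra.
Qed.

Lemma card_T : #|T| = n.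
Proof. by rewrite -(bij_eq_card ebij) card_ord. Qed.

Lemma q_le1 (X : {set T}) r : (0 < r)%N -> (0 < n)%N -> #|X|%:R / (r%:R * n%:R) <= 1 :> R.
Proof.
move=> r0 n0; rewrite ler_pdivrMr ?mul1r; last by rewrite mulr_gt0 // ltr0n.
rewrite -natrM ler_nat; apply: (leq_trans (max_card _)); rewrite card_T.
exact: leq_pmull.
Qed.

Lemma hyp_iter (X : {set T}) r t : (0 < r)%N -> (r <= #|X|)%N -> (t <= n)%N ->
  r%:R * N - Gs X r t <= (1 - #|X|%:R / (r%:R * n%:R)) ^+ t * (r%:R * N).
Proof.
move=> r0 rX; elim: t => [|t IH] ht.
  rewrite expr0 mul1r /Gs big1 ?subr0 // => s _; by rewrite cnt0 min0n.
have n0 : (0 < n)%N by exact: (leq_ltn_trans (leq0n t) ht).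
apply: le_trans (step ht r0 rX) _.
rewrite exprS -mulrA; apply: ler_wpM2l; first by rewrite subr_ge0 q_le1.
exact: IH (ltnW ht).
Qed.

Lemma hyp_final (X : {set T}) r j : (0 < r)%N -> (r <= #|X|)%N -> (j <= n)%N -> (0 < n)%N ->
  (1 - (expR (1 : R))^-1) * Num.min (j%:R * #|X|%:R / n%:R) r%:R
    <= Gs X r j / N.
Proof.
move=> r0 rX jn n0.
pose q : R := #|X|%:R / (r%:R * n%:R).
have H : r%:R * N - Gs X r j <= (1 - q) ^+ j * (r%:R * N) := hyp_iter r0 rX jn.
have q1 : q <= 1 by exact: q_le1.
have q0 : 0 <= q by rewrite /q divr_ge0 // ler0n.
have E1 : (1 - q) ^+ j <= expR (- (q * j%:R)).
  rewrite -[- (q * j%:R)]mulNr expRM_natr; apply: lerXn2r.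
  - by rewrite nnegrE subr_ge0.
  - by rewrite nnegrE expR_ge0.
  - by have := expR_ge1Dx (- q); rewrite -[1 - q]/(1 + - q).
set E := expR (- (q * j%:R)) in E1.
have rN0 : 0 <= r%:R * N by rewrite mulr_ge0 // ?ler0n ltW // N_gt0.
have G1 : r%:R * (1 - E) <= Gs X r j / N.
  rewrite ler_pdivlMr ?N_gt0 //.
  have : (1 - q) ^+ j * (r%:R * N) <= E * (r%:R * N) by apply: ler_wpM2r.
  lra.
have rpos : 0 < r%:R :> R by rewrite ltr0n.
have AE : j%:R * #|X|%:R / n%:R = r%:R * (q * j%:R) :> R.
  rewrite /q; field; apply/andP; split; rewrite pnatr_eq0 -lt0n //.
have qj0 : 0 <= q * j%:R by rewrite mulr_ge0 // ler0n.
apply: le_trans G1.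
have [h|h] := leP (j%:R * #|X|%:R / n%:R) r%:R.
- have h1 : q * j%:R <= 1.
    by rewrite -(ler_pM2l rpos) mulr1 -AE.
  rewrite AE mulrCA; apply: ler_wpM2l; first by rewrite ler0n.
  exact: key1.
- have h1 : 1 <= q * j%:R.
    by rewrite -(ler_pM2l rpos) mulr1 -AE ltW.
  rewrite mulrC; apply: ler_wpM2l; first by rewrite ler0n.
  exact: key2.
Qed.

End HypPart.

Section MatroidPart.
Variable T : finType.
Implicit Types (A B X Y : {set T}).

Lemma mrank_mono (ind : {set T} -> bool) X Y : X \subset Y ->
  (mrank ind X <= mrank ind Y)%N.
Proof.
move=> XY; apply/bigmax_leqP => I /andP[hI hIX].
by apply: leq_bigmax_cond; rewrite hI (subset_trans hIX).
Qed.

Lemma mrank0 (ind : {set T} -> bool) : mrank ind set0 = 0%N.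
Proof.
apply/eqP; rewrite -leqn0; apply/bigmax_leqP => I /andP[_].
by rewrite subset0 => /eqP ->; rewrite cards0.
Qed.

Lemma mrank_upper (ind : {set T} -> bool) A F :
  (forall I J : {set T}, J \subset I -> ind I -> ind J) ->
  (mrank ind A <= mrank ind F + #|A :&: (~: loops ind :\: F)|)%N.
Proof.
move=> sub; apply/bigmax_leqP => I /andP[hI hIA].
rewrite -(cardsID F I); apply: leq_add.
  by apply: leq_bigmax_cond; rewrite (sub I) ?subsetIl ?subsetIr.
apply: subset_leq_card; apply/subsetP => x; rewrite !inE => /andP[xF xI].
rewrite xF (subsetP hIA) //= negbK.
by apply: (sub I) => //; rewrite sub1set.
Qed.

Lemma exists_sub_card A m : (m <= #|A|)%N -> exists B, (B \subset A) && (#|B| == m).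
Proof.
elim: m => [|m IH] h; first by exists set0; rewrite sub0set cards0.
have [B /andP[BA /eqP cB]] := IH (ltnW h).
have : (0 < #|A :\: B|)%N by rewrite cardsD (setIidPr BA) cB subn_gt0.
case/card_gt0P => x; rewrite inE => /andP[xB xA].
exists (x |: B); rewrite subUset sub1set xA BA /= cardsU1 xB cB.
by [].
Qed.

Lemma card_bigcup_disj (B : nat -> {set T}) m :
  (forall i j, (i < j < m)%N -> B i :&: B j = set0) ->
  #|\bigcup_(i < m) B i| = (\sum_(i < m) #|B i|)%N.
Proof.
elim: m => [|m IH] H; first by rewrite !big_ord0 cards0.
rewrite big_ord_recr big_ord_recr /= cardsU.
rewrite IH; last by move=> i j /andP[ij jm]; apply: H; rewrite ij ltnW.
have -> : (\bigcup_(i < m) B i) :&: B m = set0.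
  apply/setP => x; rewrite !inE; apply/negbTE/andP => [[/bigcupP[i _ hi] hm]].
  have := H i m; rewrite ltn_ord leqnn => /(_ isT) /setP /(_ x).
  by rewrite !inE hi hm.
by rewrite cards0 subn0.
Qed.

Lemma partition_lower k (E : nat -> {set T}) (rk : nat -> nat) A :
  (forall i j, (i < j < k)%N -> E i.+1 :&: E j.+1 = set0) ->
  (\sum_(i < k) minn #|A :&: E i.+1| (rk i.+1) <=
     mrank (partition_indep k E rk) A)%N.
Proof.
move=> disj.
pose P i (C : {set T}) := (C \subset A :&: E i.+1) && (#|C| == minn #|A :&: E i.+1| (rk i.+1)).
pose B i := odflt set0 [pick C | P i C].
have PB : forall i, P i (B i).
  move=> i; rewrite /B; case: pickP => [C //|/= none].
  have [C hC] := exists_sub_card (geq_minl #|A :&: E i.+1| (rk i.+1)).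
  by have := none C; rewrite /P hC.
have BE : forall i, B i \subset E i.+1.
  by move=> i; have /andP[h _] := PB i; apply: subset_trans h (subsetIr _ _).
have BA : forall i, B i \subset A.
  by move=> i; have /andP[h _] := PB i; apply: subset_trans h (subsetIl _ _).
have cB : forall i, #|B i| = minn #|A :&: E i.+1| (rk i.+1).
  by move=> i; have /andP[_ /eqP h] := PB i.
set I := \bigcup_(i < k) B i.
have cI : #|I| = (\sum_(i < k) minn #|A :&: E i.+1| (rk i.+1))%N.
  rewrite card_bigcup_disj; first by apply: eq_bigr => i _; rewrite cB.
  move=> i j hij; apply/setP => x; rewrite !inE.
  apply/negbTE/andP => [[hi hj]].
  have := disj i j hij => /setP /(_ x); rewrite !inE.
  by rewrite (subsetP (BE i)) // (subsetP (BE j)).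
rewrite -cI; apply: leq_bigmax_cond; apply/andP; split.
  apply/existsP; exists [ffun i : 'I_k => B i]; apply/andP; split.
    by apply/eqP; rewrite /I; apply: eq_bigr => i _; rewrite ffunE.
  apply/forallP => i; rewrite ffunE BE /= cB; exact: geq_minr.
by apply/bigcupsP => i _; exact: BA.
Qed.

End MatroidPart.

Section EpermPart.
Variables (R : realType) (n : nat).

Lemma Eperm_le (f g : 'S_n -> R) : (forall s, f s <= g s) -> Eperm f <= Eperm g.
Proof.
move=> H; rewrite /Eperm ler_wpM2r ?invr_ge0 ?ler0n //.
by apply: ler_sum => s _; exact: H.
Qed.

Lemma Eperm_sum k (f : 'I_k -> 'S_n -> R) :
  Eperm (fun s => \sum_(l < k) f l s) = \sum_(l < k) Eperm (f l).
Proof. by rewrite /Eperm exchange_big /= mulr_suml. Qed.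

Lemma Eperm_cadd (c : R) (f : 'S_n -> R) :
  Eperm (fun s => c + f s) = c + Eperm f.
Proof.
rewrite /Eperm big_split /= sumr_const card_Sn mulrDl -[c *+ _]mulr_natr mulfK //.

Qed.

End EpermPart.

Section ExpCard.
Variables (R : realType) (T : finType) (n : nat) (e : 'I_n -> T).
Hypothesis ebij : bijective e.

Lemma Eperm_card (Y : {set T}) j : (j <= n)%N -> (0 < n)%N ->
  Eperm (fun s : 'S_n => (#|prefix_set e s j :&: Y|%:R : R))
    <= j%:R / n%:R * #|Y|%:R.
Proof.
move=> jn n0.
pose u0 := Ordinal n0.
pose L (u : 'I_n) := (\sum_(s : 'S_n) (e (s u) \in Y : nat))%N.
have Lu : forall u, L u = L u0.
  move=> u; rewrite /L.
  exact: (@swap_gen _ _ (fun s y => (e y \in Y : nat)) u u0).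
have tot : (n * L u0 = n`! * #|Y|)%N.
  have : (\sum_(u < n) L u = n`! * #|Y|)%N.
    rewrite /L exchange_big /=.
    rewrite (eq_bigr (fun _ => #|Y|)); last by move=> s _; exact: cnt_total.
    by rewrite sum_nat_const card_Sn.
  rewrite (eq_bigr (fun _ => L u0)); last by move=> u _; exact: Lu.
  by move=> <-; rewrite sum_nat_const card_ord.
have Hs : (n * \sum_(s : 'S_n) #|prefix_set e s j :&: Y| <= j * (n`! * #|Y|))%N.
  rewrite (eq_bigr (fun s => cnt e s j Y)); last by move=> s _; rewrite card_prefixI.
  rewrite /cnt exchange_big /=.
  rewrite (eq_bigr (fun _ => L u0)); last by move=> u _; rewrite -(Lu u).
  rewrite (big_ord_narrow jn) sum_nat_const card_ord mulnCA tot.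
  by [].
rewrite /Eperm -natr_sum ler_pdivrMr; last by rewrite ltr0n fact_gt0.
have nz : n%:R != 0 :> R by rewrite pnatr_eq0 -lt0n.
have -> : j%:R / n%:R * #|Y|%:R * (n`!)%:R = (j * (n`! * #|Y|))%:R / n%:R :> R.
  by rewrite !natrM; field.
rewrite ler_pdivlMr ?ltr0n // -natrM ler_nat mulnC; exact: Hs.
Qed.

End ExpCard.

Theorem lemma7 (R : realType) (T : finType) (indep : {set T} -> bool)
  (n : nat) (e : 'I_n -> T) (k : nat) (F : nat -> {set T}) (lam : nat -> R) :
  is_matroid indep ->
  bijective e ->
  principal_sequence (~: loops indep) (mrank indep) k F lam ->
  forall j : nat, (1 <= j <= n)%N ->
    (1 - (expR (1 : R))^-1) *
      Eperm (fun s => (mrank indep (prefix_set e s j))%:R)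
    <= Eperm (fun s =>
         (mrank (partition_indep k (minor_ground F)
                   (fun i => minor_rank (mrank indep) F i (minor_ground F i)))
                (prefix_set e s j))%:R).
Proof.
move=> mat ebij PS j /andP[j1 jn].
have sub : forall I J : {set T}, J \subset I -> indep I -> indep J by case: mat.
case: PS => [[F0 Fk Fpr lamdec] [lamk [_ mins]]].
have n0 : (0 < n)%N := leq_trans j1 jn.
have Fmono : forall a b, (a <= b)%N -> (b <= k)%N -> F a \subset F b.
  move=> a b; elim: b => [|b IH] ab bk.
    by move: ab; rewrite leqn0 => /eqP ->.
  move: ab; rewrite leq_eqVlt => /orP[/eqP -> //|ab].
  exact: subset_trans (IH ab (ltnW bk)) (proper_sub (Fpr b bk)).
have FS : forall a, (a <= k)%N -> F a \subset ~: loops indep.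
  by move=> a ak; rewrite -Fk; apply: Fmono.
pose rk l := minor_rank (mrank indep) F l (minor_ground F l).
have hsub : forall l, (l <= k)%N -> F l.-1 \subset F l.
  by move=> l lk; apply: Fmono => //; exact: leq_pred.
have hrk : forall l, (l <= k)%N ->
    rk l = (mrank indep (F l) - mrank indep (F l.-1))%N.
  move=> l lk; rewrite /rk /minor_rank /minor_ground; congr (_ - _)%N.
  congr (mrank indep _); apply/setP => x; rewrite !inE.
  case: (boolP (x \in F l.-1)) => h /=; rewrite ?orbT ?orbF ?andbT //.
  by rewrite (subsetP (hsub l lk) x h).
have hcE : forall l, (l <= k)%N -> #|minor_ground F l| = (#|F l| - #|F l.-1|)%N.
  by move=> l lk; rewrite cardsD (setIidPr (hsub l lk)).
have hlam : forall l, (0 < l)%N -> (l <= k)%N ->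
    (#|minor_ground F l|)%:R = lam l * (rk l)%:R :> R.
  move=> l l0 lk; have [[s1 h1] [s2 h2] _] := mins l (introT andP (conj l0 lk)).
  have e1 := h1 (F l) s2; have e2 := h2 (F l.-1) s1.
  move: e1 e2; rewrite /flam => e1 e2.
  rewrite hrk // hcE // !natrB ?(mrank_mono _ (hsub l lk)) ?subset_leq_card ?(hsub l lk) //.
  rewrite mulrBr; lra.
have hpos : forall l, (0 < l)%N -> (l <= k)%N -> (0 < #|minor_ground F l|)%N.
  move=> l l0 lk; rewrite hcE // subn_gt0; apply: proper_card.
  by have := Fpr l.-1; rewrite prednK //; apply.
have hlmono : forall l m, (0 < l)%N -> (l <= m)%N -> (m <= k)%N -> lam m <= lam l.
  move=> l m l0; elim: m => [|m IH] lm mk.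
    by move: l0; rewrite lt0n -leqn0 lm.
  move: lm; rewrite leq_eqVlt => /orP[/eqP -> //|lm].
  apply: le_trans (IH lm (ltnW mk)); apply: ltW; apply: lamdec => //.
  exact: leq_trans l0 lm.
have k0 : forall l, (0 < l)%N -> (l <= k)%N -> (0 < k)%N.
  by move=> l l0 lk; apply: leq_trans l0 lk.
have hlam1 : forall l, (0 < l)%N -> (l <= k)%N -> 1 <= lam l.
  move=> l l0 lk; apply: le_trans (lamk (k0 l l0 lk)) _.
  exact: hlmono.
have hrkle : forall l, (0 < l)%N -> (l <= k)%N -> (rk l <= #|minor_ground F l|)%N.
  move=> l l0 lk; rewrite -(ler_nat R) hlam //.
  rewrite -[X in X <= _]mul1r; apply: ler_wpM2r; first by rewrite ler0n.
  exact: hlam1.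
have hrkpos : forall l, (0 < l)%N -> (l <= k)%N -> (0 < rk l)%N.
  move=> l l0 lk; rewrite lt0n; apply/negP => /eqP h0.
  have := hlam l l0 lk; rewrite h0 mulr0 => /eqP; rewrite pnatr_eq0 => /eqP h1.
  by have := hpos l l0 lk; rewrite h1.
pose p : R := j%:R / n%:R.
have p0 : 0 <= p by rewrite /p divr_ge0 ?ler0n.
pose Pb l := (rk l.+1)%:R <= p * (#|minor_ground F l.+1|)%:R.
have pref : forall l l0, (l <= l0)%N -> (l0 < k)%N -> Pb l0 -> Pb l.
  move=> l l0 ll0 l0k; rewrite /Pb hlam // hlam //; last by apply: leq_ltn_trans ll0 l0k.
  move=> h.
  have b0 : 0 < (rk l0.+1)%:R :> R by rewrite ltr0n hrkpos.
  have h1 : 1 <= p * lam l0.+1.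
    by rewrite -(ler_pM2r b0) mul1r -mulrA.
  have h2 : p * lam l0.+1 <= p * lam l.+1.
    by apply: ler_wpM2l => //; apply: hlmono.
  rewrite mulrA -[X in X <= _]mul1r; apply: ler_wpM2r; first by rewrite ler0n.
  exact: le_trans h1 h2.
have [i [ik Hlt Hge]] : exists i, [/\ (i <= k)%N, (forall l, (l < i)%N -> Pb l) &
    (forall l, (i <= l)%N -> (l < k)%N -> ~~ Pb l)].
  suff: forall m, (m <= k)%N -> exists i, [/\ (i <= m)%N,
      (forall l, (l < i)%N -> Pb l) & (forall l, (i <= l)%N -> (l < m)%N -> ~~ Pb l)].
    by move=> /(_ k (leqnn k)) [i [? ? ?]]; exists i.
  elim=> [|m IH] mk.
    by exists 0%N; split => // l; rewrite ltn0.
  have [i0 [im H1 H2]] := IH (ltnW mk).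
  case: (boolP (Pb m)) => hm.
    exists m.+1; split => //.
      by move=> l lm; apply: (pref l m) => //; rewrite -ltnS.
    by move=> l h1 h2; move: (leq_trans h2 h1); rewrite ltnn.
  exists i0; split; first exact: leq_trans im _.
    exact: H1.
  move=> l il; rewrite ltnS leq_eqVlt => /orP[/eqP -> //|lm].
  exact: H2.
pose M (l : nat) := Num.min (j%:R * #|minor_ground F l.+1|%:R / n%:R) (rk l.+1)%:R :> R.
have jE : forall X, j%:R * X / n%:R = p * X :> R by move=> X; rewrite /p mulrAC.
have SumM : \sum_(l < k) M l =
    (mrank indep (F i))%:R + p * #|~: loops indep :\: F i|%:R.
  rewrite -(big_mkord xpredT M) (big_cat_nat (leq0n i) ik) /=.
  congr (_ + _).
    rewrite (@telescope_sumr_eq _ 0 i (fun l => (mrank indep (F l))%:R)) //.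
      by rewrite F0 mrank0 subr0.
    move=> l /andP[_ li]; have lk := leq_trans li ik.
    rewrite /M min_r; last by rewrite jE; exact: Hlt.
    by rewrite hrk // natrB // (mrank_mono _ (hsub _ lk)).
  rewrite cardsD (setIidPr (FS i ik)) -Fk natrB; last by apply: subset_leq_card; apply: Fmono.
  rewrite -(@telescope_sumr_eq _ i k (fun l => (#|F l|)%:R) (fun l => (#|minor_ground F l.+1|)%:R)) //.
    rewrite mulr_sumr; apply: eq_big_nat => l /andP[il lk].
    rewrite /M min_l; first by rewrite jE.
    by rewrite jE; apply: ltW; rewrite ltNge; exact: Hge.
  move=> l /andP[il lk]; rewrite hcE // natrB //.
  by apply: subset_leq_card; apply: hsub.
have disj : forall a b, (a < b < k)%N ->
    minor_ground F a.+1 :&: minor_ground F b.+1 = set0.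
  move=> a b /andP[ab bk]; apply/setP => x; rewrite /minor_ground !inE /=.
  apply/negbTE/andP => [[/andP[_ xa] /andP[xb _]]].
  by rewrite (subsetP (Fmono a.+1 b ab (ltnW bk)) x xa) in xb.
have Low : (1 - (expR (1 : R))^-1) * \sum_(l < k) M l <=
    Eperm (fun s =>
         (mrank (partition_indep k (minor_ground F)
                   (fun i => minor_rank (mrank indep) F i (minor_ground F i)))
                (prefix_set e s j))%:R).
  apply: (@le_trans _ _ (Eperm (fun s => (\sum_(l < k)
      minn #|prefix_set e s j :&: minor_ground F l.+1| (rk l.+1))%:R))); last first.
    apply: Eperm_le => s; rewrite ler_nat; exact: partition_lower.
  rewrite mulr_sumr /Eperm (eq_bigr (fun s => \sum_(l < k)
      ((minn #|prefix_set e s j :&: minor_ground F l.+1| (rk l.+1))%:R : R))); last first.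
    by move=> s _; rewrite natr_sum.
  rewrite exchange_big /= mulr_suml; apply: ler_sum => l _.
  have lk : (l.+1 <= k)%N := ltn_ord l.
  have E2 : \sum_s ((minn #|prefix_set e s j :&: minor_ground F l.+1| (rk l.+1))%:R : R)
      = Gs R e (minor_ground F l.+1) (rk l.+1) j.
    by rewrite /Gs; apply: eq_bigr => s _; rewrite (card_prefixI ebij).
  rewrite E2; exact: (hyp_final R ebij (hrkpos _ (ltn0Sn _) lk) (hrkle _ (ltn0Sn _) lk) jn n0).
have Up : Eperm (fun s => (mrank indep (prefix_set e s j))%:R) <=
    (mrank indep (F i))%:R + p * #|~: loops indep :\: F i|%:R :> R.
  apply: (@le_trans _ _ (Eperm (fun s => (mrank indep (F i))%:R +
     (#|prefix_set e s j :&: (~: loops indep :\: F i)|%:R : R)))).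
    by apply: Eperm_le => s; rewrite -natrD ler_nat; exact: mrank_upper.
  rewrite Eperm_cadd lerD2l; exact: (Eperm_card R ebij).
have c0 : 0 <= 1 - (expR (1 : R))^-1.
  rewrite subr_ge0 invf_le1 ?expR_gt0 //.
  by apply: le_trans (expR_ge1Dx 1); rewrite lerDr.
rewrite SumM in Low; apply: le_trans Low; exact: (ler_wpM2l c0 Up).
Qed.
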